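(* Let $T$ be a tournament in which every vertex lies in some triangle, and let $w:V(T)\to\mathbb{Q}_{\ge0}$. Suppose there is an optimal solution $x$ of $\min\{\sum_v w(v)x_v : x\in P(T)\}$ with $x_v<1/2$ for all $v\in V(T)$. Then $\mathrm{SA}_0(T,w)=\min\{\sum_v w(v)x_v: x\in P(T)\}=w(V(T))/3$.
   Context: A triangle of a tournament $T$ is a set $\{a,b,c\}\subseteq V(T)$ inducing a directed 3-cycle; $\triangle(T)$ is the set of triangles. The basic relaxation is $P(T)=\{x\in[0,1]^{V(T)}: x_a+x_b+x_c\ge 1\ \forall\{a,b,c\}\in\triangle(T)\}$ and $\mathrm{SA}_0(T,w)=\min\{\sum_v w(v)x_v: x\in P(T)\}$. $w(V(T))=\sum_{v}w(v)$. *)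

(* Defs.v *)
From HB Require Import structures.
From mathcomp Require Import all_boot all_order all_algebra.
Set Implicit Arguments. Unset Strict Implicit. Unset Printing Implicit Defensive.
Import Order.TTheory GRing.Theory Num.Theory.
Local Open Scope ring_scope.

Definition tournament (V : finType) (arc : rel V) : Prop :=
  (forall v, ~~ arc v v) /\
  (forall u v, u != v -> (arc u v && ~~ arc v u) || (arc v u && ~~ arc u v)).

Definition triangles (V : finType) (arc : rel V) : {set {set V}} :=
  [set t : {set V} | [exists a, exists b, exists c,
     (t == [set a; b; c]) && [&& arc a b, arc b c & arc c a]]].

Definition inP (R : realFieldType) (V : finType) (arc : rel V) (x : V -> R) : Prop :=
  (forall v, 0 <= x v <= 1) /\
  (forall t, t \in triangles arc -> 1 <= \sum_(v in t) x v).

Definition lp_obj (R : realFieldType) (V : finType) (w : V -> rat) (x : V -> R) : R :=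
  \sum_v ratr (w v) * x v.

Definition lp_optimal (R : realFieldType) (V : finType) (arc : rel V)
    (w : V -> rat) (x : V -> R) : Prop :=
  inP arc x /\ forall y : V -> R, inP arc y -> lp_obj w x <= lp_obj w y.

Definition is_SA0 (R : realFieldType) (V : finType) (arc : rel V)
    (w : V -> rat) (val : R) : Prop :=
  (exists x : V -> R, inP arc x /\ lp_obj w x = val) /\
  (forall y : V -> R, inP arc y -> val <= lp_obj w y).

(* Main.v *)
Require Import Defs.
From HB Require Import structures.
From mathcomp Require Import all_boot all_order all_algebra.
From mathcomp Require Import ring lra.
Import Order.TTheory GRing.Theory Num.Theory.
Local Open Scope ring_scope.

Lemma tri_sum (R : realFieldType) (V : finType) (arc : rel V) t :
  tournament arc -> t \in triangles arc ->
  exists a b c, [/\ t = [set a; b; c], a != b, a != c & b != c] /\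
   forall f : V -> R, \sum_(v in t) f v = f a + f b + f c.
Proof.
move=> [irr tot]; rewrite inE => /existsP[a /existsP[b /existsP[c]]].
case/andP=> /eqP -> /and3P[ab bc ca].
have neq : forall u v, arc u v -> u != v.
  by move=> u v h; apply/eqP=> e; move: h; rewrite e (negbTE (irr v)).
have asym : forall u v, arc u v -> ~~ arc v u.
  move=> u v h; have := tot u v (neq _ _ h).
  by case/orP=> /andP[// _]; rewrite h.
have Hab := neq _ _ ab; have Hbc := neq _ _ bc.
have Hac : a != c.
  by apply/eqP=> e; move: (asym _ _ ab); rewrite e bc.
exists a, b, c; split; first by [].
move=> f; rewrite setUC big_setU1 /=; last by rewrite !inE negb_or eq_sym Hac eq_sym Hbc.
rewrite big_setU1 /=; last by rewrite !inE Hab.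
by rewrite big_set1 addrC.
Qed.

Theorem mainTheorem12 (R : realFieldType) (V : finType) (arc : rel V)
  (w : V -> rat) :
  tournament arc ->
  (forall v : V, exists2 t, t \in triangles arc & v \in t) ->
  (forall v : V, 0 <= w v) ->
  (exists x : V -> R, lp_optimal arc w x /\ (forall v, x v < 1 / 2)) ->
  is_SA0 arc w (ratr (\sum_v w v) / 3 : R).
Proof.
move=> T Hin _ [x [[[xb xt] xopt] xh]].
set W : R := ratr (\sum_v w v).
have objc : forall (p q : R), lp_obj w (fun v => p * x v - q) = p * lp_obj w x - q * W.
  move=> p q; rewrite /lp_obj /W rmorph_sum !mulr_sumr -sumrB.
  by apply: eq_bigr => v _; ring.
have xpos : forall v, 0 < x v.
  move=> v; have [t tT vt] := Hin v.
  have [a [b [c [[et _ _ _] hs]]]] := @tri_sum R _ _ _ T tT.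
  have := xt t tT; rewrite hs.
  move: vt; rewrite et !inE => /orP[/orP[/eqP->|/eqP->]|/eqP->];
  have := xh a; have := xh b; have := xh c; lra.
set m : R := \big[Num.min/1]_v x v.
have m0 : 0 < m.
  apply: (big_ind (fun y => 0 < y)); [exact: ltr01 | by move=> p q hp hq; rewrite lt_min hp hq | by move=> i _; exact: xpos].
have m1 : m <= 1.
  apply: (big_ind (fun y => y <= 1)); [exact: lexx | by move=> p q hp hq; rewrite ge_min hp | by move=> i _; case/andP: (xb i)].
have mx : forall v, m <= x v.
  by move=> v; rewrite /m (bigD1 v) //= ge_min lexx.
have key : W / 3 <= lp_obj w x.
  pose y := fun v => (1 + m) * x v - m / 3.
  have yP : inP arc y.
    split.
      move=> v; rewrite /y; have := mx v; have := xh v; have := xpos v.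
      move=> h1 h2 h3.
      have e1 : 0 <= m * x v by rewrite mulr_ge0 // ltW.
      have e2 : m * x v <= 1 * x v by rewrite ler_wpM2r // ltW.
      apply/andP; split; rewrite mulrDl mul1r; lra.
    move=> t tT; have [a [b [c [_ hs]]]] := @tri_sum R _ _ _ T tT.
    rewrite hs /y; have := xt t tT; rewrite hs => S1.
    have e : 0 <= m * (x a + x b + x c - 1) by apply: mulr_ge0; [exact: ltW | rewrite subr_ge0].
    have -> : (1 + m) * x a - m / 3 + ((1 + m) * x b - m / 3) + ((1 + m) * x c - m / 3)
       = (x a + x b + x c) + m * (x a + x b + x c - 1) by field.
    lra.
  have := xopt y yP; rewrite /y objc => h.
  have e : 0 <= m * (lp_obj w x - W / 3).
    have -> : m * (lp_obj w x - W / 3) = (1 + m) * lp_obj w x - m / 3 * W - lp_obj w x by field.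
    by rewrite subr_ge0.
  move: e; rewrite pmulr_rge0 // subr_ge0; done.
split.
  exists (fun _ => 1 / 3); split.
    split; first by move=> v; apply/andP; split; lra.
    move=> t tT; have [a [b [c [_ hs]]]] := @tri_sum R _ _ _ T tT; rewrite hs; lra.
  have := objc 0 (-(1/3)); rewrite /lp_obj.
  under eq_bigr do rewrite mul0r sub0r opprK.
  move=> ->; rewrite mul0r add0r mulNr opprK; lra.
move=> y yP; apply: le_trans key (xopt y yP).
Qed.
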